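(* Let $\mathbf{X}\subseteq\mathbb{R}_+^n$ be an interval and $\mathrm{IC}(\mathbf{a}_0,\dots,\mathbf{a}_{n-1})$ an interval circulant matrix. (a) $\mathbf{X}$ is possibly $\mathrm{IC}$-robust, i.e. there exists $x\in\mathbf{X}$ with $x\in\mathrm{Attr}(A)$ for all $A\in\mathrm{IC}(\mathbf{a}_0,\dots,\mathbf{a}_{n-1})$, if and only if there exists $x\in\mathbf{X}$ satisfying $\lambda(A^{(i)})(A^{(i)})^{n^2}\otimes x=(A^{(i)})^{n^2+1}\otimes x$ for all $i\in\{0,\dots,n-1\}$ with $A^{(i)}\ne0$. (b) If moreover $\hat A\in\mathrm{IC}(\mathbf{a}_0,\dots,\mathbf{a}_{n-1})$, then $\mathbf{X}$ is tolerance $\mathrm{IC}$-robust (for every $x\in\mathbf{X}$ there exists $A\in\mathrm{IC}(\mathbf{a}_0,\dots,\mathbf{a}_{n-1})$ with $x\in\mathrm{Attr}(A)$) if and only if $\mathrm{IC}(\mathbf{a}_0,\dots,\mathbf{a}_{n-1})$ is possibly $\mathbf{X}$-robust (there exists $A\in\mathrm{IC}(\mathbf{a}_0,\dots,\mathbf{a}_{n-1})$ with $x\in\mathrm{Attr}(A)$ for all $x\in\mathbf{X}$).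
   Context: Max algebra on $\mathbb{R}_+$: $\oplus=\max$, ordinary product, $A^t$ max-algebraic power; $\lambda(A)$ greatest max-algebraic eigenvalue (maximum cycle geometric mean); $\mathrm{Attr}(A)=\{x\in\mathbb{R}_+^n: A^{t+1}\otimes x=\lambda(A)A^t\otimes x\text{ for some }t\ge0\}$. An interval $\mathbf{X}=\prod_i\mathbf{X}_i$ has each $\mathbf{X}_i\subseteq\mathbb{R}_+$ nonempty of one of the forms $[\underline{x}_i,\overline{x}_i]$, $(\underline{x}_i,\overline{x}_i)$, $(\underline{x}_i,\overline{x}_i]$, $[\underline{x}_i,\overline{x}_i)$. $\mathrm{Circ}(a_0,\dots,a_{n-1})$ has entries $A_{i,j}=a_t$, $t\equiv j-i\pmod n$; $\mathrm{IC}(\mathbf{a}_0,\dots,\mathbf{a}_{n-1})$ is the set of all $\mathrm{Circ}(a_0,\dots,a_{n-1})$ with $a_t\in\mathbf{a}_t$, each $\mathbf{a}_t\subseteq\mathbb{R}_+$ a nonempty interval of one of the four forms with endpoints $\underline a_t\le\overline a_t$. $A^{(k)}=\mathrm{Circ}(\underline{a}_0,\dots,\underline{a}_{k-1},\overline{a}_k,\underline{a}_{k+1},\dots,\underline{a}_{n-1})$; $\underline a=\max_k\underline a_k$, $\hat A=\mathrm{Circ}(\hat a_0,\dots,\hat a_{n-1})$, $\hat a_i=\min\{\underline a,\overline a_i\}$. *)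

(* Defs.v *)
From Stdlib Require Import Reals.
From mathcomp Require Import all_boot.
Set Implicit Arguments. Unset Strict Implicit. Unset Printing Implicit Defensive.

(* An interval with endpoints lo <= hi; cl/cr say whether the left/right
   endpoint is included: [lo,hi], (lo,hi), (lo,hi], [lo,hi). *)
Record itv := Itv { lo : R; hi : R; cl : bool; cr : bool }.

Definition in_itv (I : itv) (x : R) : Prop :=
  (if cl I then Rle (lo I) x else Rlt (lo I) x) /\
  (if cr I then Rle x (hi I) else Rlt x (hi I)).

Definition valid_itv (I : itv) : Prop :=
  Rle R0 (lo I) /\ exists x, in_itv I x.

Definition mat (n : nat) := 'I_n -> 'I_n -> R.
Definition vec (n : nat) := 'I_n -> R.

Definition mxmul n (A B : mat n) : mat n :=
  fun i j => \big[Rmax/R0]_(k < n) Rmult (A i k) (B k j).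

Definition mxvec n (A : mat n) (x : vec n) : vec n :=
  fun i => \big[Rmax/R0]_(k < n) Rmult (A i k) (x k).

Definition mxid n : mat n := fun i j => if i == j then R1 else R0.

Fixpoint mxpow n (A : mat n) (t : nat) : mat n :=
  match t with
  | 0 => @mxid n
  | t'.+1 => mxmul A (mxpow A t')
  end.

Definition rootn (k : nat) (w : R) : R :=
  if Rle_dec w R0 then R0 else Rpower w (Rinv (INR k)).

Definition cycle_weight n k (A : mat n) (s : (k.+1).-tuple 'I_n) : R :=
  \big[Rmult/R1]_(j < k.+1) A (tnth s j) (tnth s (ordS j)).

(* Closed walks of length <= n
   include all elementary cycles, and no closed walk has a larger
   geometric mean than the best elementary cycle, so this is exactly
   the maximum cycle geometric mean. *)
Definition mlambda n (A : mat n) : R :=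
  \big[Rmax/R0]_(k < n)
     \big[Rmax/R0]_(s : (k.+1).-tuple 'I_n) rootn k.+1 (cycle_weight A s).

Definition Attr n (A : mat n) (x : vec n) : Prop :=
  exists t : nat, forall i : 'I_n,
    mxvec (mxpow A t.+1) x i = Rmult (mlambda A) (mxvec (mxpow A t) x i).

Definition circ n (a : nat -> R) : mat n :=
  fun i j => a ((j + n - i) %% n).

Definition inIC n (ai : nat -> itv) (A : mat n) : Prop :=
  exists a : nat -> R,
    (forall t, t < n -> in_itv (ai t) (a t)) /\
    (forall i j, A i j = @circ n a i j).

Definition Ak n (ai : nat -> itv) (k : nat) : mat n :=
  @circ n (fun t => if t == k then hi (ai t) else lo (ai t)).

Definition ulo n (ai : nat -> itv) : R :=
  \big[Rmax/R0]_(k < n) lo (ai k).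

Definition Ahat n (ai : nat -> itv) : mat n :=
  @circ n (fun t => Rmin (ulo n ai) (hi (ai t))).

Definition mx_nonzero n (A : mat n) : Prop := exists i j, A i j <> R0.

Definition in_box n (X : 'I_n -> itv) (x : vec n) : Prop :=
  forall i, in_itv (X i) (x i).

(* Main.v *)
Require Import Defs.
From HB Require Import structures.
From Stdlib Require Import Reals Lra FunctionalExtensionality.
From mathcomp Require Import all_boot zify.
Set Implicit Arguments. Unset Strict Implicit. Unset Printing Implicit Defensive.

Lemma Rmult_assoc' : associative Rmult.
Proof. move=> x y z; by rewrite Rmult_assoc. Qed.
HB.instance Definition _ := Monoid.isComLaw.Build R R1 Rmult Rmult_assoc' Rmult_comm Rmult_1_l.

Section BigMax.
Local Open Scope R_scope.
Variable I : eqType.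

Lemma mx_ge0 (r : seq I) (P : pred I) (F : I -> R) :
  0 <= \big[Rmax/R0]_(i <- r | P i) F i.
Proof.
elim: r => [|y r IH]; first by rewrite big_nil; lra.
rewrite big_cons; case: (P y) => //; apply: Rle_trans IH (Rmax_r _ _).
Qed.

Lemma mx_ub (r : seq I) (P : pred I) (F : I -> R) i :
  i \in r -> P i -> F i <= \big[Rmax/R0]_(j <- r | P j) F j.
Proof.
elim: r => [|y r IH] //; rewrite inE big_cons => /orP [/eqP <-|ir] Pi.
  by rewrite Pi; apply: Rmax_l.
case: (P y); last exact: IH.
apply: Rle_trans (IH ir Pi) (Rmax_r _ _).
Qed.

Lemma mx_lub (r : seq I) (P : pred I) (F : I -> R) c :
  0 <= c -> (forall i, P i -> F i <= c) -> \big[Rmax/R0]_(j <- r | P j) F j <= c.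
Proof.
move=> c0 h; apply: (big_ind (fun v => v <= c)).
- exact: c0.
- by move=> x y hx hy; apply: Rmax_lub.
- by move=> i Pi; apply: h.
Qed.

Lemma mx_att (r : seq I) (P : pred I) (F : I -> R) :
  \big[Rmax/R0]_(j <- r | P j) F j = 0 \/
  exists i, P i /\ \big[Rmax/R0]_(j <- r | P j) F j = F i.
Proof.
apply: (big_ind (fun v => v = 0 \/ exists i, P i /\ v = F i)); first by left.
- move=> x y hx hy; rewrite /Rmax; by case: Rle_dec.
- by move=> i Pi; right; exists i.
Qed.

Lemma mx_le (r : seq I) (P : pred I) (F G : I -> R) :
  (forall i, P i -> F i <= G i) ->
  \big[Rmax/R0]_(j <- r | P j) F j <= \big[Rmax/R0]_(j <- r | P j) G j.
Proof.
move=> h; elim: r => [|y r IH]; first by rewrite !big_nil; lra.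
rewrite !big_cons; case Py: (P y) => //.
apply: Rmax_lub; first by apply: Rle_trans (h _ Py) (Rmax_l _ _).
apply: Rle_trans IH (Rmax_r _ _).
Qed.
End BigMax.

Section BM2.
Local Open Scope R_scope.
Lemma mxo_ub m (F : 'I_m -> R) i : F i <= \big[Rmax/R0]_(j < m) F j.
Proof. by apply: mx_ub => //; rewrite mem_index_enum. Qed.
End BM2.

Section Circ.
Local Open Scope R_scope.
Variable n : nat.
Local Notation N := n.+1.

Definition om (m : nat) : 'I_N := inord (m %% N).
Lemma om_val m : (om m : nat) = (m %% N)%N.
Proof. by rewrite /om inordK // ltn_pmod. Qed.
Lemma om_ord (c : 'I_N) : om c = c.
Proof. by apply: ord_inj; rewrite om_val modn_small. Qed.
Lemma om_modl m k : om (m %% N + k) = om (m + k).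
Proof. by rewrite /om modnDml. Qed.

Lemma modA1 c s : (c < N)%N -> (((c + s) %% N + N - c) %% N = s %% N)%N.
Proof.
move=> cN; rewrite -addnBA; last by apply: ltnW.
rewrite modnDml.
have -> : (c + s + (N - c) = s + N)%N by lia.
by rewrite modnDr.
Qed.

Lemma modA2 c k m : (c < N)%N -> ((c + (k + N - c) %% N + m) %% N = (k + m) %% N)%N.
Proof.
move=> cN; rewrite -addnA (addnC _ m) addnA modnDmr.
have -> : (c + m + (k + N - c) = (k + m) + N)%N by lia.
by rewrite modnDr.
Qed.

Definition V (a : nat -> R) (y : vec N) : vec N := mxvec (circ a) y.

Lemma V_E a y c : V a y c = \big[Rmax/R0]_(k < N) (a ((k + N - c) %% N)%N * y k).
Proof. by []. Qed.

Definition nnc (a : nat -> R) := forall t, (t < N)%N -> 0 <= a t.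
Definition vnn (y : vec N) := forall c, 0 <= y c.

Lemma circ_nn a (i j : 'I_N) : nnc a -> 0 <= circ a i j.
Proof. by move=> h; apply: h; rewrite ltn_pmod. Qed.

Lemma V_ge0 a y c : 0 <= V a y c.
Proof. exact: mx_ge0. Qed.

Lemma V_mono_y a y z c : nnc a -> (forall c, y c <= z c) -> V a y c <= V a z c.
Proof.
move=> ha h; apply: mx_le => k _; apply: Rmult_le_compat_l; last exact: h.
by apply: ha; rewrite ltn_pmod.
Qed.

Lemma V_mono_a a b y c : (forall t, (t < N)%N -> a t <= b t) -> vnn y -> V a y c <= V b y c.
Proof.
move=> h hy; apply: mx_le => k _; apply: Rmult_le_compat_r; first exact: hy.
by apply: h; rewrite ltn_pmod.
Qed.

Lemma V_hom a y r c : nnc a -> 0 <= r -> V a (fun d => r * y d) c = r * V a y c.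
Proof.
move=> ha hr; apply: Rle_antisym.
  apply: mx_lub => [|k _]; first by apply: Rmult_le_pos => //; apply: V_ge0.
  rewrite -Rmult_assoc (Rmult_comm _ r) Rmult_assoc; apply: Rmult_le_compat_l => //.
  exact: (mxo_ub (fun k => a ((k + N - c) %% N)%N * y k)).
case: (mx_att (index_enum 'I_N) (fun _ => true) (fun k => a ((k + N - c) %% N)%N * y k)) => [h|[k [_ h]]];
  rewrite [V a y c]V_E h.
  by rewrite Rmult_0_r; apply: V_ge0.
rewrite V_E.
apply: Rle_trans (mxo_ub (fun k => a ((k + N - c) %% N)%N * (r * y k)) k); right; ring.
Qed.

Lemma V_scale a y r c : 0 <= r -> V (fun t => r * a t) y c = r * V a y c.
Proof.
move=> hr; apply: Rle_antisym.
  apply: mx_lub => [|k _]; first by apply: Rmult_le_pos => //; apply: V_ge0.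
  rewrite Rmult_assoc; apply: Rmult_le_compat_l => //.
  exact: (mxo_ub (fun k => a ((k + N - c) %% N)%N * y k)).
case: (mx_att (index_enum 'I_N) (fun _ => true) (fun k => a ((k + N - c) %% N)%N * y k)) => [h|[k [_ h]]];
  rewrite [V a y c]V_E h.
  by rewrite Rmult_0_r; apply: V_ge0.
rewrite V_E.
apply: Rle_trans (mxo_ub (fun k => r * a ((k + N - c) %% N)%N * y k) k); right; ring.
Qed.

Lemma V_zero a y c : (forall t, (t < N)%N -> a t = 0) -> V a y c = 0.
Proof.
move=> h; apply: Rle_antisym; last exact: V_ge0.
apply: mx_lub => [|k _]; first lra.
by rewrite /circ h ?ltn_pmod // Rmult_0_l; lra.
Qed.

Lemma V_ext a b y c : (forall t, (t < N)%N -> a t = b t) -> V a y c = V b y c.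
Proof.
move=> h; rewrite !V_E; apply: eq_bigr => k _; by rewrite h // ltn_pmod.
Qed.

End Circ.


Section Iter.
Local Open Scope R_scope.
Variable n : nat.
Local Notation N := n.+1.
Local Notation V := (@V n).
Local Notation nnc := (@nnc n).
Local Notation vnn := (@vnn n).

Lemma It_ge0 a k (x : vec N) c : vnn x -> 0 <= iter k (V a) x c.
Proof. by case: k => [|k] hx //=; apply: V_ge0. Qed.

Lemma It_mono_y a k (y z : vec N) : nnc a -> (forall c, y c <= z c) ->
  forall c, iter k (V a) y c <= iter k (V a) z c.
Proof.
move=> ha h; elim: k => [|k IH] c //=; by apply: V_mono_y.
Qed.

Lemma It_mono_a a b k (y : vec N) : (forall t, (t < N)%N -> a t <= b t) -> nnc a -> vnn y ->
  forall c, iter k (V a) y c <= iter k (V b) y c.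
Proof.
move=> hab ha hy; elim: k => [|k IH] c /=; first lra.
apply: Rle_trans (V_mono_y _ ha IH) _.
apply: V_mono_a => // d; exact: It_ge0.
Qed.

Lemma It_hom a k (y : vec N) r : nnc a -> 0 <= r ->
  iter k (V a) (fun d => r * y d) = fun d => r * iter k (V a) y d.
Proof.
move=> ha hr; elim: k => [|k IH] //=; rewrite IH.
by apply: functional_extensionality => d; rewrite V_hom.
Qed.

Lemma It_scale a k (y : vec N) r : nnc a -> 0 <= r ->
  iter k (V (fun t => r * a t)) y = fun d => r ^ k * iter k (V a) y d.
Proof.
move=> ha hr; elim: k => [|k IH] /=.
  by apply: functional_extensionality => d; rewrite Rmult_1_l.
rewrite IH; apply: functional_extensionality => d.
rewrite V_scale // V_hom //; last by apply: pow_le.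
ring.
Qed.

Lemma It_ext a b k (y : vec N) : (forall t, (t < N)%N -> a t = b t) ->
  iter k (V a) y = iter k (V b) y.
Proof.
move=> h; elim: k => [|k IH] //=; rewrite IH.
by apply: functional_extensionality => d; apply: V_ext.
Qed.

Lemma mxvec_id (x : vec N) : vnn x -> mxvec (@mxid N) x = x.
Proof.
move=> hx; apply: functional_extensionality => i; rewrite /mxvec /mxid.
apply: Rle_antisym.
  apply: mx_lub => [|k _]; first exact: hx.
  case: eqP => [->|_]; first lra.
  rewrite Rmult_0_l; exact: hx.
have := mxo_ub (fun k : 'I_N => (if i == k then R1 else R0) * x k) i.
rewrite eqxx /=; lra.
Qed.

Lemma mxvec_mul (A B : mat N) (x : vec N) :
  (forall i j, 0 <= A i j) -> (forall i j, 0 <= B i j) -> vnn x ->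
  mxvec (mxmul A B) x = mxvec A (mxvec B x).
Proof.
move=> hA hB hx; apply: functional_extensionality => i; rewrite /mxvec /mxmul.
apply: Rle_antisym.
  apply: mx_lub => [|j _]; first exact: mx_ge0.
  case: (mx_att (index_enum 'I_N) (fun _ => true) (fun k => A i k * B k j)) => [->|[k [_ ->]]].
    rewrite Rmult_0_l; exact: mx_ge0.
  apply: Rle_trans (mxo_ub (fun k => A i k * \big[Rmax/R0]_(j < N) (B k j * x j)) k).
  rewrite Rmult_assoc; apply: Rmult_le_compat_l => //.
  exact: (mxo_ub (fun j => B k j * x j)).
apply: mx_lub => [|k _]; first exact: mx_ge0.
case: (mx_att (index_enum 'I_N) (fun _ => true) (fun j => B k j * x j)) => [->|[j [_ ->]]].
  rewrite Rmult_0_r; exact: mx_ge0.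
apply: Rle_trans (mxo_ub (fun j => \big[Rmax/R0]_(k < N) (A i k * B k j) * x j) j).
rewrite -Rmult_assoc; apply: Rmult_le_compat_r => //.
exact: (mxo_ub (fun k => A i k * B k j)).
Qed.

Lemma mxpow_nn (A : mat N) t : (forall i j, 0 <= A i j) -> forall i j, 0 <= mxpow A t i j.
Proof.
move=> hA; elim: t => [|t IH] i j /=.
  rewrite /mxid; case: eqP => _; lra.
exact: mx_ge0.
Qed.

Lemma mxpow_iter (A : mat N) t (x : vec N) : (forall i j, 0 <= A i j) -> vnn x ->
  mxvec (mxpow A t) x = iter t (mxvec A) x.
Proof.
move=> hA hx; elim: t => [|t IH] /=; first exact: mxvec_id.
by rewrite mxvec_mul // ?IH //; apply: mxpow_nn.
Qed.

Definition lam (a : nat -> R) := \big[Rmax/R0]_(t < N) a t.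

Lemma lam_ge0 a : 0 <= lam a.
Proof. exact: mx_ge0. Qed.

Lemma lam_ub a t : (t < N)%N -> a t <= lam a.
Proof. move=> ht; exact: (mxo_ub (fun t : 'I_N => a t) (Ordinal ht)). Qed.

Lemma lam_lub a c : 0 <= c -> (forall t, (t < N)%N -> a t <= c) -> lam a <= c.
Proof. move=> c0 h; apply: mx_lub => // t _; exact: h. Qed.

Lemma lam_att a : nnc a -> exists i, (i < N)%N /\ a i = lam a.
Proof.
move=> ha.
case: (mx_att (index_enum 'I_N) (fun _ => true) (fun t : 'I_N => a t)) => [h|[k [_ h]]].
  exists 0%N; split => //; rewrite /lam h; apply: Rle_antisym; last exact: ha.
  by rewrite -h; apply: lam_ub.
by exists k; split => //; rewrite /lam h.
Qed.

Lemma lam_zero a : nnc a -> lam a = 0 -> forall t, (t < N)%N -> a t = 0.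
Proof.
move=> ha h0 t ht; apply: Rle_antisym; last exact: ha.
rewrite -h0; exact: lam_ub.
Qed.

Lemma prod_const m (L : R) : \big[Rmult/R1]_(j < m) L = L ^ m.
Proof. rewrite big_const_ord; elim: m => [|m IH] //=; by rewrite IH. Qed.

Lemma prod_le m (f : 'I_m -> R) L : (forall j, 0 <= f j <= L) ->
  0 <= \big[Rmult/R1]_(j < m) f j <= L ^ m.
Proof.
move=> h.
rewrite -prod_const.
apply: (big_ind2 (fun u v => 0 <= u <= v)); first lra.
  move=> x1 x2 y1 y2 h1 h2; split; first by apply: Rmult_le_pos; lra.
  by apply: Rmult_le_compat; lra.
by move=> j _; apply: h.
Qed.

Lemma rootn_pow k (l : R) : 0 < l -> rootn k.+1 (l ^ k.+1) = l.
Proof.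
move=> hl; have hp := pow_lt l k.+1 hl.
rewrite -(Rpower_pow k.+1 l hl) in hp *.
rewrite /rootn; case: Rle_dec => h; first lra.
rewrite Rpower_mult Rinv_r ?Rpower_1 //.
apply: not_0_INR => //.
Qed.

Lemma lam_circ a : nnc a -> mlambda (circ a : mat N) = lam a.
Proof.
move=> ha; apply: Rle_antisym.
  apply: mx_lub => [|k _]; first exact: lam_ge0.
  apply: mx_lub => [|s _]; first exact: lam_ge0.
  rewrite /rootn; case: Rle_dec => hw; first exact: lam_ge0.
  have [h0 h1] : 0 <= cycle_weight (circ a) s <= lam a ^ k.+1.
    apply: prod_le => j; split; first exact: circ_nn.
    by apply: lam_ub; rewrite ltn_pmod.
  have hl : 0 < lam a.
    case: (Rle_lt_or_eq_dec _ _ (lam_ge0 a)) => // h; rewrite -h in h1.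
    rewrite pow_i in h1; [lra|lia].
  apply: Rle_trans (Rle_Rpower_l _ (lam a ^ k.+1) _ _ _) _.
  - apply: Rlt_le; apply: Rinv_0_lt_compat; apply: lt_0_INR; lia.
  - split; [lra|exact: h1].
  rewrite -(Rpower_pow k.+1 _ hl) Rpower_mult Rinv_r ?Rpower_1 //; [lra | apply: not_0_INR => //].
have [t [ht et]] := lam_att ha.
case: (Rle_lt_or_eq_dec _ _ (lam_ge0 a)) => hl; last by rewrite -hl; exact: mx_ge0.
pose s : N.-tuple 'I_N := [tuple om n (j * t)%N | j < N].
have H1 := @mx_ub _ (index_enum 'I_N) (fun _ => true) (fun k : 'I_N => \big[Rmax/R0]_(s : (k.+1).-tuple 'I_N)
          rootn k.+1 (cycle_weight (circ a) s)) (@ord_max n) (mem_index_enum _) erefl.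
apply: (Rle_trans _ _ _ _ H1) => {H1}.
have H2 := @mx_ub _ (index_enum (N.-tuple 'I_N)) (fun _ => true)
   (fun s : N.-tuple 'I_N => rootn N (cycle_weight (circ a) s)) s (mem_index_enum _) erefl.
apply: (Rle_trans _ _ _ _ H2) => {H2}.
have -> : cycle_weight (circ a) s = lam a ^ N.
  rewrite /cycle_weight.
  have -> : \big[Rmult/R1]_(j < N) circ a (tnth s j) (tnth s (ordS j)) = \big[Rmult/R1]_(j < N) lam a.
    apply: eq_bigr => j _; rewrite !tnth_mktuple /circ !om_val /=.
    rewrite modnMml mulSn (addnC t) -modnDml modA1 ?ltn_pmod // (modn_small ht) et //.
  exact: prod_const.
rewrite rootn_pow //; lra.
Qed.

End Iter.


Section Walk.
Local Open Scope R_scope.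
Variable n : nat.
Local Notation N := n.+1.
Local Notation V := (@V n).
Local Notation nnc := (@nnc n).
Local Notation vnn := (@vnn n).
Local Notation lam := (@lam n).
Local Notation om := (@om n).

Definition wt (a : nat -> R) (w : seq nat) := \big[Rmult/R1]_(s <- w) a (s %% N)%N.
Definition G a (x : vec N) w (c : 'I_N) := wt a w * x (om (c + sumn w)).

Lemma wt_ge0 a w : nnc a -> 0 <= wt a w.
Proof.
move=> ha; apply: (big_ind (fun v => 0 <= v)); first lra.
  by move=> u v hu hv; apply: Rmult_le_pos.
by move=> s _; apply: ha; rewrite ltn_pmod.
Qed.

Lemma walk_le a (x : vec N) : nnc a -> forall w c, G a x w c <= iter (size w) (V a) x c.
Proof.
move=> ha; elim=> [|s w IH] c.
  by rewrite /G /wt big_nil addn0 om_ord /=; lra.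
rewrite /G /wt big_cons -/(wt a w) /=.
set k := om (c + s).
have ek : om (c + (s + sumn w)) = om (k + sumn w) by rewrite /k om_val om_modl addnA.
rewrite ek Rmult_assoc.
apply: Rle_trans (Rmult_le_compat_l _ _ _ (ha _ (ltn_pmod _ (ltn0Sn n))) (IH k)) _.
rewrite V_E.
have := mxo_ub (fun k0 : 'I_N => a ((k0 + N - c) %% N)%N * iter (size w) (V a) x k0) k.
by rewrite /= /k om_val modA1.
Qed.

Lemma walk_lub a (x : vec N) : nnc a -> forall L c B, 0 <= B ->
  (forall w, size w = L -> G a x w c <= B) -> iter L (V a) x c <= B.
Proof.
move=> ha; elim=> [|L IH] c B hB h.
  have := h [::] erefl; by rewrite /G /wt big_nil addn0 om_ord /=; lra.
rewrite /= V_E; apply: mx_lub => // k _.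
set ak := a ((k + N - c) %% N)%N.
have hak : 0 <= ak by apply: ha; rewrite ltn_pmod.
case: (Rle_lt_or_eq_dec _ _ hak) => hk; last by rewrite -hk Rmult_0_l.
have : iter L (V a) x k <= B / ak.
  apply: IH; first by apply: Rmult_le_pos => //; apply: Rlt_le; apply: Rinv_0_lt_compat.
  move=> w sw; have := h (((k + N - c) %% N)%N :: w); rewrite /= sw => /(_ erefl).
  rewrite /G /wt big_cons -/(wt a w) modn_mod -/ak.
  have -> : om (c + ((k + N - c) %% N + sumn w)) = om (k + sumn w).
    by rewrite /om addnA modA2.
  move=> hw; apply: (Rmult_le_reg_l ak) => //.
  rewrite (_ : ak * (B / ak) = B); last by field; lra.
  rewrite /G -Rmult_assoc; exact: hw.
move=> hI; apply: Rle_trans (Rmult_le_compat_l _ _ _ hak hI) _.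
right; field; lra.
Qed.

Lemma size_sum (w : seq nat) : all (fun s => s < N)%N w ->
  size w = (\sum_(s < N) count_mem (s : nat) w)%N.
Proof.
elim: w => [|y w IH] /=; first by rewrite big1.
move=> /andP [hy hw]; rewrite big_split /= -IH //.
rewrite (bigD1 (Ordinal hy)) //= eqxx big1 ?add1n ?addn0 //.
move=> j /negP hj; case: eqP => // e; case: hj; apply/eqP; exact: ord_inj.
Qed.

Lemma pigeon (w : seq nat) : all (fun s => s < N)%N w -> (N * n < size w)%N ->
  exists s, (s < N)%N /\ (N <= count_mem s w)%N.
Proof.
move=> ha hs; case: (boolP [exists s : 'I_N, (N <= count_mem (s : nat) w)%N]).
  by move=> /existsP [s hs']; exists s.
move=> /existsPn hn'; exfalso.
have : (size w <= \sum_(s < N) n)%N.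
  rewrite size_sum //; apply: leq_sum => s _; have := hn' s; rewrite -ltnNge; lia.
rewrite sum_nat_const card_ord; lia.
Qed.

Lemma rem_nseq (s : nat) k (w : seq nat) : (k <= count_mem s w)%N ->
  exists w', perm_eq w (nseq k s ++ w').
Proof.
elim: k w => [|k IH] w hk; first by exists w.
have sw : s \in w by rewrite -has_pred1 has_count; lia.
have /IH [w' hw'] : (k <= count_mem s (rem s w))%N by rewrite count_mem_rem eqxx; lia.
exists w'; apply: perm_trans (perm_to_rem sw) _.
by rewrite /= perm_cons.
Qed.

Lemma wt_perm a w1 w2 : perm_eq w1 w2 -> wt a w1 = wt a w2.
Proof. by move=> h; apply: perm_big. Qed.

Lemma wt_nseq a k s w : wt a (nseq k s ++ w) = a (s %% N)%N ^ k * wt a w.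
Proof.
rewrite /wt big_cat big_nseq; congr (_ * _).
elim: k => [|k IH] //=; by rewrite IH.
Qed.

Lemma om_sumn_mod c w : om (c + sumn (map (fun s => s %% N) w)%N) = om (c + sumn w).
Proof.
have H : (sumn (map (fun s => s %% N) w) %% N = sumn w %% N)%N.
  elim: w => [|s w IH] //=.
  by rewrite -modnDm IH modnDm modnDml.
by rewrite /om -modnDmr H modnDmr.
Qed.

Lemma Stab_up a (x : vec N) L c : nnc a -> vnn x -> (N * n < L)%N ->
  iter L (V a) x c <= lam a ^ N * iter (L - N) (V a) x c.
Proof.
move=> ha hx hL; apply: walk_lub => //.
  apply: Rmult_le_pos; [apply: pow_le; exact: lam_ge0 | exact: It_ge0].
move=> w sw.
set w1 := map (fun s => s %% N)%N w.
have e1 : G a x w c = G a x w1 c.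
  rewrite /G om_sumn_mod /wt /w1 big_map; congr (_ * _).
  by apply: eq_bigr => s _; rewrite modn_mod.
have hall : all (fun s => s < N)%N w1 by apply/allP => s /mapP [s' _ ->]; exact: ltn_pmod.
have [s [hs hcs]] : exists s, (s < N)%N /\ (N <= count_mem s w1)%N.
  by apply: pigeon => //; rewrite size_map sw.
have [w2 hw2] := rem_nseq hcs.
have sw2 : size w2 = (L - N)%N.
  have := perm_size hw2; rewrite size_cat size_nseq /w1 size_map sw => ->; by rewrite addKn.
rewrite e1 /G (wt_perm a hw2) wt_nseq (perm_sumn hw2) sumn_cat sumn_nseq.
have -> : om (c + (s * N + sumn w2)) = om (c + sumn w2).
  by rewrite /om addnC -addnA modnMDl addnC.
rewrite Rmult_assoc; apply: Rmult_le_compat.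
- apply: pow_le; apply: ha; exact: ltn_pmod.
- apply: Rmult_le_pos; [exact: wt_ge0 | exact: hx].
- apply: pow_incr; split; [apply: ha; exact: ltn_pmod | apply: lam_ub; exact: ltn_pmod].
- rewrite -sw2; exact: walk_le.
Qed.

Lemma Stab_low a (y : vec N) i c : nnc a -> (i < N)%N ->
  a i ^ N * y c <= iter N (V a) y c.
Proof.
move=> ha hi; have := walk_le y ha (nseq N i) c.
rewrite size_nseq /G.
have -> : wt a (nseq N i) = a i ^ N.
  by have := wt_nseq a N i [::]; rewrite cats0 => ->; rewrite /wt big_nil modn_small // Rmult_1_r.
have -> : om (c + sumn (nseq N i)) = c.
  by rewrite sumn_nseq /om addnC modnMDl -/(om c) om_ord.
done.
Qed.
End Walk.

Section Stab.
Local Open Scope R_scope.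
Variable n : nat.
Local Notation N := n.+1.
Local Notation V := (@V n).
Local Notation nnc := (@nnc n).
Local Notation vnn := (@vnn n).
Local Notation lam := (@lam n).

Lemma Stab a (x : vec N) L : nnc a -> vnn x -> (N * n < L)%N ->
  iter L (V a) x = fun c => lam a ^ N * iter (L - N) (V a) x c.
Proof.
move=> ha hx hL; apply: functional_extensionality => c; apply: Rle_antisym.
  exact: Stab_up.
have hNL : (N <= L)%N by nia.
have -> : iter L (V a) x = iter N (V a) (iter (L - N) (V a) x) by rewrite -iterD subnKC.
have [i [hi ei]] := lam_att ha.
rewrite -ei; exact: Stab_low.
Qed.

Lemma Stab_iter a (x : vec N) j r : nnc a -> vnn x ->
  iter (N * N + r + j * N) (V a) x = fun c => lam a ^ (j * N) * iter (N * N + r) (V a) x c.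
Proof.
move=> ha hx; elim: j => [|j IH].
  by apply: functional_extensionality => c; rewrite mul0n addn0 /= Rmult_1_l.
rewrite Stab //; last by nia.
have -> : (N * N + r + j.+1 * N - N = N * N + r + j * N)%N by nia.
rewrite IH; apply: functional_extensionality => c.
by rewrite mulSn pow_add Rmult_assoc.
Qed.

Definition acond a (x : vec N) t := forall c, iter t.+1 (V a) x c = lam a * iter t (V a) x c.

Lemma acond_mono a (x : vec N) t d : nnc a -> acond a x t -> acond a x (t + d).
Proof.
move=> ha ht; elim: d => [|d IH]; first by rewrite addn0.
move=> c; rewrite addnS.
change (V a (iter (t + d).+1 (V a) x) c = lam a * V a (iter (t + d) (V a) x) c).
have -> : iter (t + d).+1 (V a) x = fun c => lam a * iter (t + d) (V a) x c.
  exact: functional_extensionality.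
by rewrite V_hom //; apply: lam_ge0.
Qed.

Lemma Tlem a (x : vec N) : nnc a -> vnn x -> (exists t, acond a x t) -> acond a x (N * N).
Proof.
move=> ha hx [t ht].
case: (Rle_lt_or_eq_dec _ _ (@lam_ge0 n a)) => hl; last first.
  move=> c; rewrite /= V_zero; first by rewrite -hl Rmult_0_l.
  by apply: lam_zero.
have hm := @acond_mono a x t (N * N + 0 + t * N - t)%N ha ht.
rewrite subnKC in hm; last by nia.
move=> c; have := hm c.
have -> : ((N * N + 0 + t * N).+1 = N * N + 1 + t * N)%N by lia.
rewrite !Stab_iter // addn0.
move=> h.
have hp : 0 < lam a ^ (t * N) by apply: pow_lt.
apply: (Rmult_eq_reg_l (lam a ^ (t * N))); last lra.
rewrite -[(N * N).+1]addn1 h; ring.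
Qed.

Lemma Mlem b b' (x : vec N) i : nnc b' -> (forall t, (t < N)%N -> b' t <= b t) ->
  (forall t, (t < N)%N -> b t <= 1) -> (i < N)%N -> b' i = 1 -> vnn x ->
  (exists t, acond b' x t) -> acond b x (N * N).
Proof.
move=> hb' hle hb1 hi hi1 hx ht.
have hb : nnc b by move=> t htN; apply: Rle_trans (hb' t htN) (hle t htN).
have l1 : lam b = 1.
  apply: Rle_antisym; first by apply: lam_lub => //; lra.
  by rewrite -hi1; apply: Rle_trans (hle i hi) (lam_ub _ hi).
have l1' : lam b' = 1.
  apply: Rle_antisym; last by rewrite -hi1; apply: lam_ub.
  by apply: lam_lub => [|t htN]; [lra | apply: Rle_trans (hle t htN) (hb1 t htN)].
set M := (N * N)%N.
have hT := Tlem hb' hx ht.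
set v' := iter M (V b') x.
have hv'nn : vnn v' by move=> c; exact: It_ge0.
have fix' : V b' v' = v'.
  apply: functional_extensionality => c; have := hT c; rewrite l1' Rmult_1_l /=; done.
have up' : forall (y : vec N) j, vnn y -> forall c, y c <= iter (j * N) (V b') y c.
  move=> y j hy; elim: j => [|j IH] c; first by rewrite mul0n /=; lra.
  rewrite mulSn iterD.
  apply: Rle_trans (IH c) _.
  have := Stab_low (iter (j * N) (V b') y) c hb' hi; rewrite hi1 pow1 Rmult_1_l; done.
have xv : forall c, x c <= v' c by move=> c; exact: (up' x N hx c).
have v'P : forall c, v' c <= iter M (V b) x c by move=> c; apply: It_mono_a.
have stabb : forall k (y : vec N), vnn y -> iter (M + k * N) (V b) y = iter M (V b) y.
  move=> k y hy; have := Stab_iter k 0 hb hy; rewrite addn0 l1 => ->.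
  by apply: functional_extensionality => c; rewrite pow1 Rmult_1_l.
have PP : iter M (V b) v' = iter M (V b) x.
  apply: functional_extensionality => c; apply: Rle_antisym; last first.
    exact: It_mono_y.
  apply: Rle_trans (It_mono_y M hb v'P c) _.
  rewrite -iterD; have := stabb N x hx; rewrite /M => <-.
  lra.
have inc : forall k c, iter k (V b) v' c <= iter k.+1 (V b) v' c.
  elim=> [|k IH] c /=.
    rewrite -{1}fix'; apply: V_mono_a => //.
  by apply: V_mono_y.
have inc2 : forall k d c, iter k (V b) v' c <= iter (k + d) (V b) v' c.
  move=> k; elim=> [|d IH] c; first by rewrite addn0; lra.
  by rewrite addnS; apply: Rle_trans (IH c) (inc _ c).
have fixP : forall c, iter M.+1 (V b) v' c = iter M (V b) v' c.
  move=> c; apply: Rle_antisym; last exact: inc.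
  have := inc2 M.+1 n c; rewrite addSn -addnS.
  have -> : (M + n.+1 = M + 1 * N)%N by rewrite mul1n.
  by rewrite stabb.
move=> c; rewrite l1 Rmult_1_l.
change (V b (iter M (V b) x) c = iter M (V b) x c).
rewrite -PP; exact: fixP c.
Qed.
End Stab.

Section Cont.
Local Open Scope R_scope.
Lemma abs_le_inv (u b : R) : Rabs u <= b -> - b <= u <= b.
Proof. move=> h; have := Rle_abs u; have := Rle_abs (- u); rewrite Rabs_Ropp; lra. Qed.

Variable n : nat.
Local Notation N := n.+1.
Local Notation V := (@V n).
Local Notation nnc := (@nnc n).
Local Notation vnn := (@vnn n).
Local Notation lam := (@lam n).

Definition inb (a : nat -> R) Bd := forall t, (t < N)%N -> 0 <= a t <= Bd.
Definition close (a a' : nat -> R) e := forall t, (t < N)%N -> Rabs (a t - a' t) <= e.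

Lemma V_bound a (y : vec N) Bd Y c : inb a Bd -> (forall c, 0 <= y c <= Y) -> 0 <= Bd -> 0 <= Y ->
  0 <= V a y c <= Bd * Y.
Proof.
move=> ha hy hB hY; split; first exact: V_ge0.
apply: mx_lub => [|k _]; first by apply: Rmult_le_pos.
have [h1 h2] := ha _ (ltn_pmod (k + N - c) (ltn0Sn n)).
have [h3 h4] := hy k.
by apply: Rmult_le_compat.
Qed.

Lemma V_lip1 a a' (y y' : vec N) Bd Y d e c : inb a Bd -> inb a' Bd -> close a a' e ->
  (forall c, 0 <= y c <= Y) -> (forall c, 0 <= y' c <= Y) -> (forall c, Rabs (y c - y' c) <= d) ->
  0 <= e -> 0 <= d -> 0 <= Bd -> 0 <= Y ->
  V a y c <= V a' y' c + (Bd * d + e * Y).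
Proof.
move=> ha ha' hc hy hy' hd he hd0 hB hY.
apply: mx_lub => [|k _].
  apply: Rplus_le_le_0_compat; first exact: V_ge0.
  by apply: Rplus_le_le_0_compat; apply: Rmult_le_pos.
set t := ((k + N - c) %% N)%N.
have htN : (t < N)%N by apply: ltn_pmod.
have [h1 h2] := ha _ htN; have [h1' h2'] := ha' _ htN.
have [h3 h4] := abs_le_inv (hc _ htN).
have [h5 h6] := abs_le_inv (hd k).
have [h7 h8] := hy k; have [h7' h8'] := hy' k.
have hub := mxo_ub (fun k0 : 'I_N => a' ((k0 + N - c) %% N)%N * y' k0) k.
rewrite V_E; rewrite -/t in hub |- *.
have e1 : a t * y k = a' t * y' k + (a t * (y k - y' k) + (a t - a' t) * y' k) by ring.
rewrite e1; apply: Rplus_le_compat; first exact: hub.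
apply: Rplus_le_compat.
  apply: Rle_trans (Rmult_le_compat_l _ _ _ h1 h6) _.
  by apply: Rmult_le_compat_r.
have : (a t - a' t) * y' k <= e * y' k by apply: Rmult_le_compat_r.
have : e * y' k <= e * Y by apply: Rmult_le_compat_l.
lra.
Qed.

Lemma V_lip a a' (y y' : vec N) Bd Y d e c : inb a Bd -> inb a' Bd -> close a a' e ->
  (forall c, 0 <= y c <= Y) -> (forall c, 0 <= y' c <= Y) -> (forall c, Rabs (y c - y' c) <= d) ->
  0 <= e -> 0 <= d -> 0 <= Bd -> 0 <= Y ->
  Rabs (V a y c - V a' y' c) <= Bd * d + e * Y.
Proof.
move=> ha ha' hc hy hy' hd he hd0 hB hY; apply: Rabs_le; split.
  have : V a' y' c <= V a y c + (Bd * d + e * Y).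
    apply: V_lip1 => // [t ht|c']; first by rewrite Rabs_minus_sym; apply: hc.
    by rewrite Rabs_minus_sym.
  lra.
have := V_lip1 c ha ha' hc hy hy' hd he hd0 hB hY; lra.
Qed.

Lemma It_bound a (x : vec N) Bd X k c : inb a Bd -> (forall c, 0 <= x c <= X) -> 0 <= Bd -> 0 <= X ->
  0 <= iter k (V a) x c <= Bd ^ k * X.
Proof.
move=> ha hx hB hX; elim: k c => [|k IH] c /=; first by rewrite Rmult_1_l.
rewrite Rmult_assoc; apply: V_bound => //.
apply: Rmult_le_pos => //; exact: pow_le.
Qed.

Lemma It_lip a' (x : vec N) Bd X k : inb a' Bd -> (forall c, 0 <= x c <= X) -> 0 <= Bd -> 0 <= X ->
  exists K, 0 <= K /\ forall a e, inb a Bd -> close a a' e -> 0 <= e ->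
    forall c, Rabs (iter k (V a) x c - iter k (V a') x c) <= K * e.
Proof.
move=> ha' hx hB hX; elim: k => [|k [K [hK IH]]].
  exists 0; split; first lra.
  by move=> a e _ _ he c /=; rewrite Rminus_diag Rabs_R0; lra.
exists (Bd * K + Bd ^ k * X); split.
  apply: Rplus_le_le_0_compat; first exact: Rmult_le_pos.
  apply: Rmult_le_pos => //; exact: pow_le.
move=> a e ha hc he c /=.
have := @V_lip a a' (iter k (V a) x) (iter k (V a') x) Bd (Bd ^ k * X) (K * e) e c ha ha' hc.
move=> /(_ (fun c => It_bound k c ha hx hB hX) (fun c => It_bound k c ha' hx hB hX)
         (IH a e ha hc he)).
move=> H; apply: Rle_trans (H he _ hB _) _.
- exact: Rmult_le_pos.
- apply: Rmult_le_pos => //; exact: pow_le.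
right; ring.
Qed.

Lemma lam_lip a a' e : nnc a -> nnc a' -> close a a' e -> 0 <= e -> Rabs (lam a - lam a') <= e.
Proof.
move=> ha ha' hc he; apply: Rabs_le.
have h1 : lam a <= lam a' + e.
  apply: lam_lub => [|t ht]; first by have := @lam_ge0 n a'; lra.
  have := abs_le_inv (hc t ht); have := lam_ub a' ht; lra.
have h2 : lam a' <= lam a + e.
  apply: lam_lub => [|t ht]; first by have := @lam_ge0 n a; lra.
  have := abs_le_inv (hc t ht); have := lam_ub a ht; lra.
lra.
Qed.

Lemma cont a' (x : vec N) : nnc a' -> vnn x ->
  (forall e, 0 < e -> exists a, nnc a /\ close a a' e /\ acond a x (N * N)) ->
  acond a' x (N * N).
Proof.
move=> ha' hx hap r.
set M := (N * N)%N.
set Bd := lam a' + 1.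
set X := \big[Rmax/R0]_(c < N) x c.
have hX : 0 <= X by apply: mx_ge0.
have hxX : forall c, 0 <= x c <= X by move=> c; split; [exact: hx | exact: (mxo_ub x c)].
have hB : 0 <= Bd by have := @lam_ge0 n a'; rewrite /Bd; lra.
have ha'B : inb a' Bd by move=> t ht; split; [exact: ha' | have := lam_ub a' ht; rewrite /Bd; lra].
have [K1 [hK1 L1]] := It_lip M.+1 ha'B hxX hB hX.
have [K0 [hK0 L0]] := It_lip M ha'B hxX hB hX.
set C := K1 + Bd * K0 + Bd ^ M * X.
have hC : 0 <= C.
  apply: Rplus_le_le_0_compat; first apply: Rplus_le_le_0_compat => //; first exact: Rmult_le_pos.
  apply: Rmult_le_pos => //; exact: pow_le.
set D := iter M.+1 (V a') x r - lam a' * iter M (V a') x r.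
have bound : forall e, 0 < e <= 1 -> Rabs D <= C * e.
  move=> e [he0 he1].
  have [a [ha [hc hac]]] := hap e he0.
  have haB : inb a Bd.
    move=> t ht; split; first exact: ha.
    have := abs_le_inv (hc t ht); have := lam_ub a' ht; rewrite /Bd; lra.
  have l1 := L1 a e haB hc (Rlt_le _ _ he0) r.
  have l0 := L0 a e haB hc (Rlt_le _ _ he0) r.
  have ll := lam_lip ha ha' hc (Rlt_le _ _ he0).
  have hla : 0 <= lam a <= Bd.
    split; first exact: lam_ge0.
    have := abs_le_inv ll; rewrite /Bd; lra.
  have hP0 := It_bound M r ha'B hxX hB hX.
  have eD : D = - (iter M.+1 (V a) x r - iter M.+1 (V a') x r)
       + lam a * (iter M (V a) x r - iter M (V a') x r)
       + (lam a - lam a') * iter M (V a') x r.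
    by rewrite /D (hac r) /M; ring.
  rewrite eD.
  apply: Rle_trans (Rabs_triang _ _) _.
  apply: Rle_trans (Rplus_le_compat_r _ _ _ (Rabs_triang _ _)) _.
  rewrite Rabs_Ropp !Rabs_mult (Rabs_pos_eq (lam a)); last lra.
  rewrite (Rabs_pos_eq (iter M (V a') x r)); last lra.
  have t2 : lam a * Rabs (iter M (V a) x r - iter M (V a') x r) <= Bd * (K0 * e).
    apply: Rmult_le_compat; [lra | exact: Rabs_pos | lra | exact: l0].
  have t3 : Rabs (lam a - lam a') * iter M (V a') x r <= e * (Bd ^ M * X).
    apply: Rmult_le_compat; [exact: Rabs_pos | lra | exact: ll | lra].
  rewrite /C; nra.
apply: Rminus_diag_uniq; rewrite -/D.
case: (Req_dec D 0) => // hD; exfalso.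
have hDp : 0 < Rabs D by apply: Rabs_pos_lt.
set e := Rmin 1 (Rabs D / (C + 1)).
have he0 : 0 < e.
  apply: Rmin_pos; first lra.
  apply: Rdiv_lt_0_compat => //; lra.
have hb := bound e (conj he0 (Rmin_l _ _)).
have he2 : e <= Rabs D / (C + 1) by apply: Rmin_r.
have : C * e <= C * (Rabs D / (C + 1)) by apply: Rmult_le_compat_l.
have : C * (Rabs D / (C + 1)) < Rabs D.
  apply: (Rmult_lt_reg_r (C + 1)); first lra.
  rewrite Rmult_assoc /Rdiv Rmult_assoc Rinv_l; last lra.
  nra.
lra.
Qed.
End Cont.

Section Help.
Local Open Scope R_scope.

Lemma itv_in I v : valid_itv I -> in_itv I v -> 0 <= lo I /\ lo I <= v <= hi I.
Proof.
move=> [h0 _]; rewrite /in_itv; case: (cl I); case: (cr I) => [] [h1 h2]; lra.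
Qed.

Lemma itv_lohi I : valid_itv I -> 0 <= lo I /\ lo I <= hi I.
Proof. move=> hv; have [v hvI] := proj2 hv; have := itv_in hv hvI; lra. Qed.

Definition near_hi I e := if cr I then hi I else Rmax ((lo I + hi I) / 2) (hi I - e / 2).
Definition near_lo I e := if cl I then lo I else Rmin ((lo I + hi I) / 2) (lo I + e / 2).

Lemma near_hi_ok I e : valid_itv I -> 0 < e -> in_itv I (near_hi I e) /\ Rabs (near_hi I e - hi I) <= e.
Proof.
move=> [h0 [v hv]] he; move: hv; rewrite /in_itv /near_hi.
case: (cl I); case: (cr I) => [] [h1 h2].
- split; [lra|]; rewrite Rminus_diag Rabs_R0; lra.
- rewrite /Rmax; case: Rle_dec => h; (split; [lra|apply: Rabs_le; lra]).
- split; [lra|]; rewrite Rminus_diag Rabs_R0; lra.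
- rewrite /Rmax; case: Rle_dec => h; (split; [lra|apply: Rabs_le; lra]).
Qed.

Lemma near_lo_ok I e : valid_itv I -> 0 < e -> in_itv I (near_lo I e) /\ Rabs (near_lo I e - lo I) <= e.
Proof.
move=> [h0 [v hv]] he; move: hv; rewrite /in_itv /near_lo.
case: (cl I); case: (cr I) => [] [h1 h2].
- split; [lra|]; rewrite Rminus_diag Rabs_R0; lra.
- split; [lra|]; rewrite Rminus_diag Rabs_R0; lra.
- rewrite /Rmin; case: Rle_dec => h; (split; [lra|apply: Rabs_le; lra]).
- rewrite /Rmin; case: Rle_dec => h; (split; [lra|apply: Rabs_le; lra]).
Qed.

Lemma div_le p q u v : 0 < p -> 0 < q -> u * q <= v * p -> / p * u <= / q * v.
Proof.
move=> hp hq h.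
have -> : / p * u = (u * q) * / (p * q) by field; lra.
have -> : / q * v = (v * p) * / (p * q) by field; lra.
apply: Rmult_le_compat_r => //; apply: Rlt_le; apply: Rinv_0_lt_compat; nra.
Qed.
End Help.

Section Main.
Local Open Scope R_scope.
Variable n : nat.
Local Notation N := n.+1.
Local Notation V := (@V n).
Local Notation nnc := (@nnc n).
Local Notation vnn := (@vnn n).
Local Notation lam := (@lam n).

Lemma inIC_circ (ai : nat -> itv) (A : mat N) : inIC ai A ->
  exists a, (forall t, (t < N)%N -> in_itv (ai t) (a t)) /\ A = circ a.
Proof.
move=> [a [h1 h2]]; exists a; split => //.
by apply: functional_extensionality => i; apply: functional_extensionality => j.
Qed.

Lemma Attr_iff a (x : vec N) : nnc a -> vnn x -> (Attr (circ a) x <-> exists t, acond a x t).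
Proof.
move=> ha hx; rewrite /Attr lam_circ //.
have hA : forall i j : 'I_N, 0 <= circ a i j by move=> i j; exact: circ_nn.
split => [[t ht]|[t ht]]; exists t => c.
  by have := ht c; rewrite !mxpow_iter.
by rewrite !mxpow_iter //; exact: ht.
Qed.

Lemma acond0 a (x : vec N) : nnc a -> lam a = 0 -> acond a x 0.
Proof.
move=> ha h0 c; rewrite /= V_zero ?h0 ?Rmult_0_l //; exact: lam_zero.
Qed.

Lemma lam_scale a r : nnc a -> 0 <= r -> lam (fun t => r * a t) = r * lam a.
Proof.
move=> ha hr; apply: Rle_antisym.
  apply: lam_lub => [|t ht]; first by apply: Rmult_le_pos => //; exact: lam_ge0.
  by apply: Rmult_le_compat_l => //; exact: lam_ub.
have [i [hi ei]] := lam_att ha; rewrite -ei.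
exact: (@lam_ub n (fun t => r * a t) i hi).
Qed.

Lemma acond_scale a (x : vec N) t r : nnc a -> 0 < r ->
  (acond (fun s => r * a s) x t <-> acond a x t).
Proof.
move=> ha hr; rewrite /acond !It_scale //; try lra.
rewrite lam_scale //; last lra.
have hp : 0 < r ^ t by apply: pow_lt.
split => h c; have := h c.
  move=> e; apply: (Rmult_eq_reg_l (r ^ t.+1)); last by apply: Rgt_not_eq; apply: pow_lt.
  rewrite e /=; ring.
move=> e; rewrite e /=; ring.
Qed.

Lemma box_nn (X : 'I_N -> itv) (x : vec N) : (forall i, valid_itv (X i)) -> in_box X x -> vnn x.
Proof. move=> hX hx c; have := itv_in (hX c) (hx c); lra. Qed.

End Main.

Section Parts.
Local Open Scope R_scope.
Variable n : nat.
Local Notation N := n.+1.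
Local Notation V := (@V n).
Local Notation nnc := (@nnc n).
Local Notation vnn := (@vnn n).
Local Notation lam := (@lam n).

Variables (X : 'I_N -> itv) (ai : nat -> itv).
Hypothesis hX : forall i, valid_itv (X i).
Hypothesis ha : forall t, (t < N)%N -> valid_itv (ai t).

Definition ak (i : nat) := fun t => if t == i then hi (ai t) else lo (ai t).

Lemma ak_nn i : nnc (ak i).
Proof.
move=> t ht; have [h0 h1] := itv_lohi (ha ht); rewrite /ak; case: eqP => _; lra.
Qed.

Lemma conv a' (x : vec N) : nnc a' -> vnn x ->
  ((forall r, mlambda (circ a' : mat N) * mxvec (mxpow (circ a') (N ^ 2)%N) x r
             = mxvec (mxpow (circ a') (N ^ 2).+1) x r) <-> acond a' x (N * N)).
Proof.
move=> ha' hx.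
have hA : forall i j : 'I_N, 0 <= circ a' i j by move=> i j; exact: circ_nn.
rewrite lam_circ // !mxpow_iter // -mulnn; split => h r; by rewrite h.
Qed.

Lemma partA1 (x : vec N) : in_box X x ->
  (forall i, (i < N)%N -> acond (ak i) x (N * N)) -> forall A, inIC ai A -> Attr A x.
Proof.
move=> hxb hR A hA.
have hx := box_nn hX hxb.
have [a [hai ->]] := inIC_circ hA.
have han : nnc a by move=> t ht; have := itv_in (ha ht) (hai t ht); lra.
apply/Attr_iff => //.
case: (Rle_lt_or_eq_dec _ _ (@lam_ge0 n a)) => hl; last by exists 0%N; apply: acond0.
have [i [hiN ei]] := lam_att han.
set a' := ak i.
have hai' : a' i = hi (ai i) by rewrite /a' /ak eqxx.
have hlohi : forall t, (t < N)%N -> lo (ai t) <= a t <= hi (ai t).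
  by move=> t ht; have := itv_in (ha ht) (hai t ht); lra.
have hl' : lam a' = hi (ai i).
  apply: Rle_antisym; last by rewrite -hai'; apply: lam_ub; exact: hiN.
  apply: lam_lub => [|t ht]; first by have := hlohi i hiN; lra.
  rewrite /a' /ak; case: eqP => [->|_]; first lra.
  have := hlohi t ht; have := hlohi i hiN; have := lam_ub a ht; lra.
have hlp : 0 < lam a' by rewrite hl'; have := hlohi i hiN; lra.
have hb1 : exists t, acond (fun s => / lam a' * a' s) x t.
  exists (N * N)%N; apply/acond_scale => //; first exact: ak_nn.
  - by apply: Rinv_0_lt_compat.
  exact: hR.
have hres : acond (fun s => / lam a * a s) x (N * N).
apply: (@Mlem n (fun s => / lam a * a s) (fun s => / lam a' * a' s) x i).
- move=> t ht; apply: Rmult_le_pos; [apply: Rlt_le; exact: Rinv_0_lt_compat | exact: ak_nn].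
- move=> t ht; apply: div_le => //.
  rewrite /a' /ak; case: eqP => [->|_].
    by rewrite ei hl'; right; ring.
  rewrite hl'; have := hlohi t ht; have := hlohi i hiN; have := itv_lohi (ha ht); move=> h0 h1 h2.
  apply: Rmult_le_compat; lra.
- move=> t ht; rewrite -(Rinv_l (lam a)); last lra.
  apply: Rmult_le_compat_l; [apply: Rlt_le; exact: Rinv_0_lt_compat | exact: lam_ub].
- exact: hiN.
- by rewrite hai' -hl' Rinv_l //; lra.
- exact: hx.
- exact: hb1.
exists (N * N)%N.
by apply/(acond_scale x (N * N) han (Rinv_0_lt_compat _ hl)).
Qed.

Lemma partA2 (x : vec N) : in_box X x -> (forall A, inIC ai A -> Attr A x) ->
  forall i, (i < N)%N -> acond (ak i) x (N * N).
Proof.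
move=> hxb hL i hiN; have hx := box_nn hX hxb.
apply: cont => //; first exact: ak_nn.
move=> e he.
set a := fun t => if t == i then near_hi (ai t) e else near_lo (ai t) e.
have hai : forall t, (t < N)%N -> in_itv (ai t) (a t) /\ Rabs (a t - ak i t) <= e.
  move=> t ht; rewrite /a /ak; case: eqP => _;
    [exact: near_hi_ok (ha ht) he | exact: near_lo_ok (ha ht) he].
have han : nnc a by move=> t ht; have := itv_in (ha ht) (hai t ht).1; lra.
exists a; split => //; split.
  move=> t ht; exact: (hai t ht).2.
apply: Tlem => //; apply/Attr_iff => //; apply: hL.
by exists a; split => // t ht; exact: (hai t ht).1.
Qed.

Lemma partB : inIC ai (@Ahat N ai) -> (forall x, in_box X x -> exists A, inIC ai A /\ Attr A x) ->
  forall x, in_box X x -> Attr (@Ahat N ai) x.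
Proof.
move=> hhat htol x hxb; have hx := box_nn hX hxb.
have [A [hA hAx]] := htol x hxb.
have [a [hai eA]] := inIC_circ hA; rewrite eA in hAx.
have hlohi : forall t, (t < N)%N -> lo (ai t) <= a t <= hi (ai t).
  by move=> t ht; have := itv_in (ha ht) (hai t ht); lra.
have han : nnc a by move=> t ht; have := itv_in (ha ht) (hai t ht); lra.
set u := ulo N ai.
set ah := fun t => Rmin u (hi (ai t)).
have hu0 : 0 <= u by apply: mx_ge0.
have hlon : nnc (fun k => lo (ai k)) by move=> t ht; have := itv_lohi (ha ht); lra.
have hahn : nnc ah.
  move=> t ht; have := itv_lohi (ha ht); rewrite /ah /Rmin; case: Rle_dec; lra.
have hahu : forall t, (t < N)%N -> ah t <= u by move=> t ht; apply: Rmin_l.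
change (Attr (circ ah) x).
apply/Attr_iff => //.
case: (Rle_lt_or_eq_dec _ _ hu0) => hup; last first.
  exists 0%N; apply: acond0 => //; apply: Rle_antisym; last exact: lam_ge0.
  apply: lam_lub => [|t ht]; first lra.
  by rewrite hup; apply: hahu.
have hlu : u <= lam a.
  rewrite /u /ulo; apply: (@lam_lub n (fun k => lo (ai k))) => [|t ht]; first exact: lam_ge0.
  have := hlohi t ht; have := lam_ub a ht; lra.
have hl : 0 < lam a by lra.
have [i [hiN ei]] := lam_att han.
have hlh : lam ah = u.
  apply: Rle_antisym; first by apply: lam_lub => //; lra.
  have [k [hk ek]] := lam_att hlon.
  have ek' : ah k = u.
    rewrite /ah /Rmin; case: Rle_dec => // h; exfalso; apply: h.
    have := itv_lohi (ha hk); rewrite /u /ulo; rewrite -[\big[Rmax/R0]_(k0 < N) lo (ai k0)]/(lam (fun k => lo (ai k))) -ek; lra.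
  rewrite -ek'; exact: lam_ub.
have hres : acond (fun s => / u * ah s) x (N * N).
  apply: (@Mlem n (fun s => / u * ah s) (fun s => / lam a * a s) x i).
  - move=> t ht; apply: Rmult_le_pos; [apply: Rlt_le; exact: Rinv_0_lt_compat | exact: han].
  - move=> t ht; apply: div_le => //.
    have := hlohi t ht; have := lam_ub a ht; have := itv_lohi (ha ht); move=> h0 h1 h2.
    rewrite /ah /Rmin; case: Rle_dec => h.
      rewrite (Rmult_comm u); apply: Rmult_le_compat_r; lra.
    apply: Rmult_le_compat; lra.
  - move=> t ht; rewrite -(Rinv_l u); last lra.
    apply: Rmult_le_compat_l; [apply: Rlt_le; exact: Rinv_0_lt_compat | exact: hahu].
  - exact: hiN.
  - by rewrite ei Rinv_l //; lra.
  - exact: hx.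
  - have [t ht] := (Attr_iff han hx).1 hAx.
    exists t; apply/acond_scale => //; exact: Rinv_0_lt_compat.
exists (N * N)%N.
by apply/(acond_scale x (N * N) hahn (Rinv_0_lt_compat _ hup)).
Qed.

End Parts.

Section Extra.
Local Open Scope R_scope.
Variable n : nat.
Local Notation N := n.+1.

Lemma acond_lam0 a (x : vec N) t : nnc n a -> lam n a = 0 -> acond a x t.
Proof.
move=> ha h0 c; rewrite /= V_zero ?h0 ?Rmult_0_l //; exact: lam_zero.
Qed.

Lemma nz_of_lam a : nnc n a -> 0 < lam n a -> mx_nonzero (circ a : mat N).
Proof.
move=> ha hl; have [t [ht et]] := lam_att ha.
exists ord0, (Ordinal ht); rewrite /circ /= subn0 modnDr modn_small // et; lra.
Qed.
End Extra.

Unset Implicit Arguments.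
Theorem mainTheorem20 (n : nat) (X : 'I_n -> itv) (ai : nat -> itv)
  (hX : forall i, valid_itv (X i))
  (ha : forall t, t < n -> valid_itv (ai t)) :
  ((exists x, in_box X x /\ forall A : mat n, inIC ai A -> Attr A x)
   <->
   (exists x, in_box X x /\
      forall i, i < n -> mx_nonzero (@Ak n ai i) ->
        forall r : 'I_n,
          Rmult (mlambda (@Ak n ai i)) (mxvec (mxpow (@Ak n ai i) (n ^ 2)) x r)
          = mxvec (mxpow (@Ak n ai i) (n ^ 2).+1) x r))
  /\
  (inIC ai (@Ahat n ai) ->
   ((forall x, in_box X x -> exists A : mat n, inIC ai A /\ Attr A x)
    <->
    (exists A : mat n, inIC ai A /\ forall x, in_box X x -> Attr A x))).
Proof.
case: n X ai hX ha => [|n] X ai hX ha.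
  split; first split.
  - move=> _; exists (fun _ => R0); split; first by case.
    by move=> i _ _ [].
  - move=> _; exists (fun _ => R0); split; first by case.
    by move=> A _; exists 0; case.
  - move=> hh; split.
    + by move=> _; exists (Ahat ai); split => // x _; exists 0; case.
    + by move=> [A [hA hall]] x hx; exists A; split => //; exact: hall.
split; first split.
- move=> [x [hxb hL]]; exists x; split => // i hi _.
  have hx := box_nn hX hxb.
  apply/(conv (ak_nn ha i) hx).
  exact: (partA2 hX ha hxb hL hi).
- move=> [x [hxb hR]]; exists x; split => //.
  have hx := box_nn hX hxb.
  apply: (partA1 hX ha hxb) => i hi.
  case: (Rle_lt_or_eq_dec _ _ (@lam_ge0 n (ak ai i))) => hl; last first.
    apply: acond_lam0 => //; exact: ak_nn.
  apply/(conv (ak_nn ha i) hx).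
  apply: hR => //.
  exact: nz_of_lam (ak_nn ha i) hl.
- move=> hh; split.
  + move=> htol; exists (Ahat ai); split => //.
    exact: (partB hX ha hh htol).
  + by move=> [A [hA hall]] x hx; exists A; split => //; exact: hall.
Qed.
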